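(* Let $g:\mathbb{R}^2\to\mathbb{R}^2$ be a $C^1$ map with $g(0)=0$, let $L>0$, and for $\delta>0$ let $\tilde S(\delta)=\{(x,y):|y|\le L|x|,\ |x|\le\delta\}$. Let $\tilde U=[-\alpha,\alpha]\times[-\beta,\beta]$ with $\alpha,\beta>0$ and $\beta/\alpha>L$. Let $\tilde v:[-1,1]\to\tilde U$ be continuous with $\tilde v(-1)\in\{y=-Lx\}$, $\tilde v(1)\in\{y=Lx\}$ and $\pi_x\tilde v(s)\neq0$ for all $s\in[-1,1]$. Assume that for every matrix $C\in[Dg(\tilde U)]$ and every $y$ with $|y|\le L$ we have $|\pi_x C(1,y)|>1$ and $|\pi_y C(1,y)|\le L$. Then for every $\delta>0$ there exist $p\in\tilde S(\delta)$ and an integer $n\ge0$ such that $g^k(p)\in\tilde U$ for $0\le k\le n$ and $g^n(p)\in\tilde v([-1,1])$.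
   Context: $\pi_x,\pi_y$ denote the projections of $\mathbb{R}^2$ onto the first and second coordinates. For a set $U\subset\mathbb{R}^2$, $[Dg(U)]$ denotes the interval enclosure of the derivative: the set of all $2\times2$ matrices $(a_{ij})$ with $a_{ij}\in[\inf_{p\in U}\partial g_i/\partial x_j(p),\ \sup_{p\in U}\partial g_i/\partial x_j(p)]$. *)

(* Defs.v *)
From Stdlib Require Import Reals.
From Coquelicot Require Import Coquelicot.
Open Scope R_scope.

(* Points of R^2 are pairs; pi_x = fst, pi_y = snd. *)
Definition comp1 (g : R * R -> R * R) (p : R * R) : R := fst (g p).
Definition comp2 (g : R * R -> R * R) (p : R * R) : R := snd (g p).

Definition ex_dx (f : R * R -> R) (p : R * R) : Prop :=
  ex_derive (fun t => f (t, snd p)) (fst p).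
Definition ex_dy (f : R * R -> R) (p : R * R) : Prop :=
  ex_derive (fun t => f (fst p, t)) (snd p).
Definition dx (f : R * R -> R) (p : R * R) : R :=
  Derive (fun t => f (t, snd p)) (fst p).
Definition dy (f : R * R -> R) (p : R * R) : R :=
  Derive (fun t => f (fst p, t)) (snd p).

Definition C1_scalar (f : R * R -> R) : Prop :=
  (forall p, ex_dx f p) /\ (forall p, ex_dy f p) /\
  (forall p, continuous (dx f) p) /\ (forall p, continuous (dy f) p).

Definition C1_map (g : R * R -> R * R) : Prop :=
  C1_scalar (comp1 g) /\ C1_scalar (comp2 g).

Definition Dg_entry (g : R * R -> R * R) (i j : nat) : R * R -> R :=
  match i, j with
  | O, O => dx (comp1 g)
  | O, _ => dy (comp1 g)
  | _, O => dx (comp2 g)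
  | _, _ => dy (comp2 g)
  end.

Definition in_hull (U : R * R -> Prop) (d : R * R -> R) (a : R) : Prop :=
  let S := fun r => exists p, U p /\ r = d p in
  Rbar_le (Glb_Rbar S) (Finite a) /\ Rbar_le (Finite a) (Lub_Rbar S).

(* 2x2 matrix (a11,a12,a21,a22) belongs to the interval enclosure [Dg(U)] *)
Definition in_IDg (g : R * R -> R * R) (U : R * R -> Prop)
    (a11 a12 a21 a22 : R) : Prop :=
  in_hull U (Dg_entry g 0 0) a11 /\ in_hull U (Dg_entry g 0 1) a12 /\
  in_hull U (Dg_entry g 1 0) a21 /\ in_hull U (Dg_entry g 1 1) a22.

Definition Scone (L delta : R) (p : R * R) : Prop :=
  Rabs (snd p) <= L * Rabs (fst p) /\ Rabs (fst p) <= delta.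

Definition Box (alpha beta : R) (p : R * R) : Prop :=
  Rabs (fst p) <= alpha /\ Rabs (snd p) <= beta.

(* Main.v *)
Require Import Defs.
From Stdlib Require Import Reals Lra Lia Classical.
From Coquelicot Require Import Coquelicot.
Open Scope R_scope.


Lemma hull_mem U d p : U p -> in_hull U d (d p).
Proof.
  intros Hp. unfold in_hull. split.
  - destruct (Glb_Rbar_correct (fun r => exists p, U p /\ r = d p)) as [H _].
    apply H. exists p; auto.
  - destruct (Lub_Rbar_correct (fun r => exists p, U p /\ r = d p)) as [H _].
    apply H. exists p; auto.
Qed.

Lemma hull_between U d a b c :
  in_hull U d a -> in_hull U d b -> a <= c <= b -> in_hull U d c.
Proof.
  unfold in_hull. intros [Ha1 Ha2] [Hb1 Hb2] [H1 H2]. split.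
  - eapply Rbar_le_trans. exact Ha1. exact H1.
  - eapply Rbar_le_trans. 2: exact Hb2. exact H2.
Qed.

Lemma hull_glb_le U d a b : in_hull U d a -> in_hull U d b ->
  Glb_Rbar (fun r => exists p, U p /\ r = d p) = Finite a -> a <= b.
Proof. unfold in_hull; simpl. intros _ [Hb _] E. rewrite E in Hb. exact Hb. Qed.

Lemma hull_lub_ge U d a b : in_hull U d a -> in_hull U d b ->
  Lub_Rbar (fun r => exists p, U p /\ r = d p) = Finite a -> b <= a.
Proof. unfold in_hull; simpl. intros _ [_ Hb] E. rewrite E in Hb. exact Hb. Qed.

Lemma Rabs_eps_mul e x : (e = 1 \/ e = -1) -> Rabs (e * x) = Rabs x.
Proof. intros [-> | ->]. - rewrite Rmult_1_l; auto. - replace (-1 * x) with (- x) by ring; apply Rabs_Ropp. Qed.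

Section Lam.
Variables (U : R * R -> Prop) (d1 d2 : R * R -> R) (L : R) (p0 : R * R).
Hypothesis Up0 : U p0.
Hypothesis HL : 0 < L.
Hypothesis Hyp : forall a b y, in_hull U d1 a -> in_hull U d2 b -> Rabs y <= L ->
  Rabs (a + b * y) > 1.

Let S1 := fun r => exists p, U p /\ r = d1 p.
Let S2 := fun r => exists p, U p /\ r = d2 p.

Lemma lam_S1 e : (e = 1 \/ e = -1) -> e * d1 p0 > 1 ->
  forall a, in_hull U d1 a -> e * a > 1.
Proof.
  intros He Hd a Ha.
  assert (H0 : Rabs (a + d2 p0 * 0) > 1) by (apply Hyp; auto; [apply hull_mem; auto | rewrite Rabs_R0; lra]).
  rewrite Rmult_0_r, Rplus_0_r in H0.
  assert (Hz : ~ in_hull U d1 0).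
  { intro Hz. assert (H := Hyp 0 (d2 p0) 0 Hz (hull_mem _ _ _ Up0) ltac:(rewrite Rabs_R0; lra)).
    rewrite Rmult_0_r, Rplus_0_r, Rabs_R0 in H. lra. }
  destruct (Rlt_or_le 1 (e * a)) as [h|h]; auto. exfalso. apply Hz.
  assert (Hd0 : in_hull U d1 (d1 p0)) by (apply hull_mem; auto).
  destruct He as [-> | ->].
  - assert (a < -1) by (unfold Rabs in H0; destruct Rcase_abs; lra).
    apply (hull_between _ _ a (d1 p0)); auto; lra.
  - assert (a > 1) by (unfold Rabs in H0; destruct Rcase_abs; lra).
    apply (hull_between _ _ (d1 p0) a); auto; lra.
Qed.

Lemma lam_S2 e : (e = 1 \/ e = -1) -> e * d1 p0 > 1 ->
  forall a b y, in_hull U d1 a -> in_hull U d2 b -> Rabs y <= L -> e * (a + b * y) > 1.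
Proof.
  intros He Hd a b y Ha Hb Hy.
  assert (Ht := lam_S1 e He Hd a Ha).
  assert (H := Hyp a b y Ha Hb Hy).
  rewrite <- (Rabs_eps_mul e) in H by auto.
  destruct (Rlt_or_le 1 (e * (a + b * y))) as [h|h]; auto. exfalso.
  assert (Hw : e * (a + b * y) < -1) by (unfold Rabs in H; destruct Rcase_abs; lra).
  set (t := e * a) in *. set (w := e * (a + b * y)) in *.
  set (y' := y * t / (t - w)).
  assert (Hy' : Rabs y' <= L).
  { unfold y'. unfold Rdiv. rewrite Rabs_mult, Rabs_mult, Rabs_inv.
    rewrite (Rabs_right t) by lra. rewrite (Rabs_right (t - w)) by lra.
    apply Rle_trans with (Rabs y); auto.
    assert (0 <= Rabs y) by apply Rabs_pos.
    assert (t * / (t - w) <= 1).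
    { apply Rmult_le_reg_r with (t - w); [lra|]. field_simplify; lra. }
    assert (0 <= t * / (t - w)) by (apply Rmult_le_pos; [lra| left; apply Rinv_0_lt_compat; lra]).
    rewrite Rmult_assoc. nra. }
  assert (H2 := Hyp a b y' Ha Hb Hy').
  assert (E : e * (a + b * y') = 0).
  { assert (Eby : e * b * y = w - t) by (unfold w, t; ring).
    replace (e * (a + b * y')) with (t + (e * b * y) * (t / (t - w))) by (unfold y', t, Rdiv; ring).
    rewrite Eby. field. lra. }
  rewrite <- (Rabs_eps_mul e) in H2 by auto. rewrite E, Rabs_R0 in H2. lra.
Qed.

Lemma lam_S3 e : (e = 1 \/ e = -1) -> e * d1 p0 > 1 ->
  exists m, in_hull U d1 m /\ forall a, in_hull U d1 a -> e * a >= e * m.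
Proof.
  intros He Hd.
  assert (Hd0 : in_hull U d1 (d1 p0)) by (apply hull_mem; auto).
  assert (HS1 := lam_S1 e He Hd).
  destruct He as [-> | ->].
  - destruct (Glb_Rbar S1) as [r| |] eqn:E.
    + exists r. assert (Hr : in_hull U d1 r).
      { split. fold S1. rewrite E. simpl. lra.
        destruct Hd0 as [H1 H2]. fold S1 in H1. rewrite E in H1. simpl in H1.
        eapply Rbar_le_trans. 2: exact H2. simpl. exact H1. }
      split; auto. intros a Ha. destruct Ha as [H1 _]. fold S1 in H1. rewrite E in H1. simpl in H1. lra.
    + destruct Hd0 as [H1 _]. fold S1 in H1. rewrite E in H1. simpl in H1. contradiction.
    + exfalso. assert (H0 : in_hull U d1 0).
      { split. fold S1. rewrite E. simpl. auto.
        destruct Hd0 as [_ H2]. eapply Rbar_le_trans. 2: exact H2. simpl. lra. }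
      specialize (HS1 0 H0). lra.
  - destruct (Lub_Rbar S1) as [r| |] eqn:E.
    + exists r. assert (Hr : in_hull U d1 r).
      { split. 2: (fold S1; rewrite E; simpl; lra).
        destruct Hd0 as [H1 H2]. fold S1 in H2. rewrite E in H2. simpl in H2.
        eapply Rbar_le_trans. exact H1. simpl. exact H2. }
      split; auto. intros a Ha. destruct Ha as [_ H1]. fold S1 in H1. rewrite E in H1. simpl in H1. lra.
    + exfalso. assert (H0 : in_hull U d1 0).
      { split. 2: (fold S1; rewrite E; simpl; auto).
        destruct Hd0 as [H1 _]. eapply Rbar_le_trans. exact H1. simpl. lra. }
      specialize (HS1 0 H0). lra.
    + destruct Hd0 as [_ H1]. fold S1 in H1. rewrite E in H1. simpl in H1. contradiction.
Qed.

Lemma lam_S4 e m : (e = 1 \/ e = -1) -> e * d1 p0 > 1 -> in_hull U d1 m ->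
  exists lo hi, in_hull U d2 lo /\ in_hull U d2 hi /\
    forall b, in_hull U d2 b -> lo <= b <= hi.
Proof.
  intros He Hd Hm.
  assert (He0 : in_hull U d2 (d2 p0)) by (apply hull_mem; auto).
  assert (HS2 := lam_S2 e He Hd m).
  assert (Hee : e * e = 1) by (destruct He as [-> | ->]; ring).
  assert (Hem : e * m <= Rabs m) by (destruct He as [-> | ->]; unfold Rabs; destruct Rcase_abs; lra).
  assert (HeL : Rabs (e * L) <= L) by (rewrite Rabs_eps_mul by auto; rewrite Rabs_right; lra).
  assert (HeL' : Rabs (- e * L) <= L) by (rewrite Ropp_mult_distr_l_reverse, Rabs_Ropp; auto).
  assert (Hlo : exists lo, in_hull U d2 lo /\ forall b, in_hull U d2 b -> lo <= b).
  { destruct (Glb_Rbar S2) as [r| |] eqn:E.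
    + exists r. assert (Hr : in_hull U d2 r).
      { split. fold S2. rewrite E. simpl. lra.
        destruct He0 as [H1 H2]. fold S2 in H1. rewrite E in H1. simpl in H1.
        eapply Rbar_le_trans. 2: exact H2. simpl. exact H1. }
      split; auto. intros a Ha. destruct Ha as [H1 _]. fold S2 in H1. rewrite E in H1. simpl in H1. lra.
    + destruct He0 as [H1 _]. fold S2 in H1. rewrite E in H1. simpl in H1. contradiction.
    + exfalso. set (b0 := Rmin (d2 p0) (- (Rabs m + 1) / L)).
      assert (H0 : in_hull U d2 b0).
      { split. fold S2. rewrite E. simpl. auto.
        destruct He0 as [_ H2]. eapply Rbar_le_trans. 2: exact H2. simpl. apply Rmin_l. }
      specialize (HS2 b0 (e * L) Hm H0 HeL).
      assert (b0 * L <= - (Rabs m + 1)).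
      { apply Rle_trans with (- (Rabs m + 1) / L * L).
        apply Rmult_le_compat_r; [lra | apply Rmin_r]. right; field; lra. }
      replace (e * (m + b0 * (e * L))) with (e * m + (e * e) * (b0 * L)) in HS2 by ring.
      rewrite Hee in HS2. lra. }
  assert (Hhi : exists hi, in_hull U d2 hi /\ forall b, in_hull U d2 b -> b <= hi).
  { destruct (Lub_Rbar S2) as [r| |] eqn:E.
    + exists r. assert (Hr : in_hull U d2 r).
      { split. 2: (fold S2; rewrite E; simpl; lra).
        destruct He0 as [H1 H2]. fold S2 in H2. rewrite E in H2. simpl in H2.
        eapply Rbar_le_trans. exact H1. simpl. exact H2. }
      split; auto. intros a Ha. destruct Ha as [_ H1]. fold S2 in H1. rewrite E in H1. simpl in H1. lra.
    + exfalso. set (b0 := Rmax (d2 p0) ((Rabs m + 1) / L)).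
      assert (H0 : in_hull U d2 b0).
      { split. 2: (fold S2; rewrite E; simpl; auto).
        destruct He0 as [H1 _]. eapply Rbar_le_trans. exact H1. simpl. apply Rmax_l. }
      specialize (HS2 b0 (- e * L) Hm H0 HeL').
      assert (b0 * L >= (Rabs m + 1)).
      { apply Rle_ge, Rle_trans with ((Rabs m + 1) / L * L).
        right; field; lra. apply Rmult_le_compat_r; [lra | apply Rmax_r]. }
      replace (e * (m + b0 * (- e * L))) with (e * m - (e * e) * (b0 * L)) in HS2 by ring.
      rewrite Hee in HS2. lra.
    + destruct He0 as [_ H1]. fold S2 in H1. rewrite E in H1. simpl in H1. contradiction. }
  destruct Hlo as [lo [Hlo1 Hlo2]]. destruct Hhi as [hi [Hhi1 Hhi2]].
  exists lo, hi. split; [auto|split; [auto|]]. intros b Hbb; split; auto.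
Qed.

Lemma lam_main : exists e lam, (e = 1 \/ e = -1) /\ lam > 1 /\
  forall a b y, in_hull U d1 a -> in_hull U d2 b -> Rabs y <= L -> e * (a + b * y) >= lam.
Proof.
  assert (H0 : Rabs (d1 p0 + d2 p0 * 0) > 1)
    by (apply Hyp; [apply hull_mem; auto | apply hull_mem; auto | rewrite Rabs_R0; lra]).
  rewrite Rmult_0_r, Rplus_0_r in H0.
  assert (HE : exists e, (e = 1 \/ e = -1) /\ e * d1 p0 > 1).
  { destruct (Rlt_dec 0 (d1 p0)).
    - exists 1. split; auto. unfold Rabs in H0; destruct Rcase_abs; lra.
    - exists (-1). split; auto. unfold Rabs in H0; destruct Rcase_abs; lra. }
  destruct HE as [e [He Hd]].
  destruct (lam_S3 e He Hd) as [m [Hm Hm2]].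
  destruct (lam_S4 e m He Hd Hm) as [lo [hi [Hlo [Hhi Hb]]]].
  assert (HS2 := lam_S2 e He Hd m).
  assert (Hee : e * e = 1) by (destruct He as [-> | ->]; ring).
  assert (Kc : forall c, in_hull U d2 c -> e * m - L * Rabs c > 1).
  { intros c Hc. destruct (Rle_dec 0 c).
    - assert (Hy : Rabs (- e * L) <= L) by (rewrite Ropp_mult_distr_l_reverse, Rabs_Ropp, Rabs_eps_mul by auto; rewrite Rabs_right; lra).
      specialize (HS2 c _ Hm Hc Hy).
      replace (e * (m + c * (- e * L))) with (e * m - (e*e) * (c * L)) in HS2 by ring.
      rewrite Hee in HS2. rewrite Rabs_right by lra. lra.
    - assert (Hy : Rabs (e * L) <= L) by (rewrite Rabs_eps_mul by auto; rewrite Rabs_right; lra).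
      specialize (HS2 c _ Hm Hc Hy).
      replace (e * (m + c * (e * L))) with (e * m + (e*e) * (c * L)) in HS2 by ring.
      rewrite Hee in HS2. rewrite Rabs_left by lra. lra. }
  exists e, (e * m - L * Rmax (Rabs lo) (Rabs hi)). split; auto. split.
  - destruct (Rmax_Rle (Rabs lo) (Rabs hi) (Rabs lo)) as [_ _].
    unfold Rmax; destruct Rle_dec; [apply Kc; auto | apply Kc; auto].
  - intros a b y Ha Hbb Hy. specialize (Hm2 a Ha). specialize (Hb b Hbb).
    assert (Hby : Rabs b <= Rmax (Rabs lo) (Rabs hi)).
    { unfold Rmax; destruct Rle_dec; unfold Rabs in *; repeat destruct Rcase_abs; lra. }
    assert (Hp : - (Rabs b * Rabs y) <= e * (b * y)).
    { rewrite <- Rabs_mult. rewrite <- (Rabs_eps_mul e (b * y)) by auto.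
      unfold Rabs; destruct Rcase_abs; lra. }
    assert (Hq : Rabs b * Rabs y <= Rmax (Rabs lo) (Rabs hi) * L).
    { apply Rmult_le_compat; auto using Rabs_pos. }
    nra.
Qed.
End Lam.

Definition cont2 (f : R * R -> R) p := forall eps, 0 < eps -> exists d, 0 < d /\
  forall q, Rabs (fst q - fst p) < d -> Rabs (snd q - snd p) < d -> Rabs (f q - f p) < eps.

Lemma continuous_cont2 h p : continuous h p -> cont2 h p.
Proof.
  intros H eps Heps.
  assert (Hb : locally (h p) (ball (h p) (mkposreal eps Heps))) by apply locally_ball.
  specialize (H _ Hb). destruct H as [d Hd]. exists d. split; [apply cond_pos|].
  intros q H1 H2. apply (Hd q). split; auto.
Qed.

Lemma between_abs x u c : Rmin x u <= c <= Rmax x u -> Rabs (c - x) <= Rabs (u - x).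
Proof. unfold Rmin, Rmax, Rabs. intros. repeat destruct Rle_dec; repeat destruct Rcase_abs; lra. Qed.

Lemma between_abs2 x u c : Rmin x u <= c <= Rmax x u -> Rabs c <= Rmax (Rabs x) (Rabs u).
Proof. unfold Rmin, Rmax, Rabs. intros. repeat destruct Rle_dec; repeat destruct Rcase_abs; lra. Qed.

Lemma mvt_x f : (forall p, ex_dx f p) -> forall x1 x2 y, exists c,
  Rmin x1 x2 <= c <= Rmax x1 x2 /\ f (x2, y) - f (x1, y) = dx f (c, y) * (x2 - x1).
Proof.
  intros Hf x1 x2 y.
  destruct (MVT_gen (fun t => f (t, y)) x1 x2 (fun t => dx f (t, y))) as [c Hc].
  - intros t _. apply (Derive_correct (fun t0 => f (t0, y)) t (Hf (t, y))).
  - intros t _. apply continuity_pt_filterlim. exact (ex_derive_continuous (fun t0 => f (t0, y)) t (Hf (t, y))).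
  - exists c. exact Hc.
Qed.

Lemma mvt_y f : (forall p, ex_dy f p) -> forall x y1 y2, exists c,
  Rmin y1 y2 <= c <= Rmax y1 y2 /\ f (x, y2) - f (x, y1) = dy f (x, c) * (y2 - y1).
Proof.
  intros Hf x y1 y2.
  destruct (MVT_gen (fun t => f (x, t)) y1 y2 (fun t => dy f (x, t))) as [c Hc].
  - intros t _. apply (Derive_correct (fun t0 => f (x, t0)) t (Hf (x, t))).
  - intros t _. apply continuity_pt_filterlim. exact (ex_derive_continuous (fun t0 => f (x, t0)) t (Hf (x, t))).
  - exists c. exact Hc.
Qed.

Lemma C1_cont f : C1_scalar f -> forall p, cont2 f p.
Proof.
  intros [Hx [Hy [Cx Cy]]] [x y] eps Heps.
  destruct (continuous_cont2 _ _ (Cx (x, y)) 1 Rlt_0_1) as [d1 [Hd1 K1]].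
  destruct (continuous_cont2 _ _ (Cy (x, y)) 1 Rlt_0_1) as [d2 [Hd2 K2]].
  set (A := Rabs (dx f (x, y)) + 1). set (B := Rabs (dy f (x, y)) + 1).
  assert (HA : 0 < A) by (unfold A; generalize (Rabs_pos (dx f (x, y))); lra).
  assert (HB : 0 < B) by (unfold B; generalize (Rabs_pos (dy f (x, y))); lra).
  set (d := Rmin (Rmin d1 d2) (Rmin (eps / (2 * A)) (eps / (2 * B)))).
  assert (Hd : 0 < d).
  { unfold d. repeat apply Rmin_glb_lt; auto; apply Rdiv_lt_0_compat; lra. }
  exists d. split; auto. intros [u v] Hu Hv. simpl in Hu, Hv |- *.
  assert (Hdd1 : d <= d1) by (unfold d; eapply Rle_trans; [apply Rmin_l|apply Rmin_l]).
  assert (Hdd2 : d <= d2) by (unfold d; eapply Rle_trans; [apply Rmin_l|apply Rmin_r]).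
  assert (Hdd3 : d <= eps / (2 * A)) by (unfold d; eapply Rle_trans; [apply Rmin_r|apply Rmin_l]).
  assert (Hdd4 : d <= eps / (2 * B)) by (unfold d; eapply Rle_trans; [apply Rmin_r|apply Rmin_r]).
  destruct (mvt_x f Hx x u v) as [c1 [Hc1 E1]].
  destruct (mvt_y f Hy x y v) as [c2 [Hc2 E2]].
  replace (f (u, v) - f (x, y)) with ((f (u, v) - f (x, v)) + (f (x, v) - f (x, y))) by ring.
  rewrite E1, E2.
  assert (B1 : Rabs (dx f (c1, v)) < A).
  { assert (Rabs (dx f (c1, v) - dx f (x, y)) < 1).
    { apply K1; simpl. generalize (between_abs _ _ _ Hc1); lra. lra. }
    unfold A. generalize (Rabs_triang_inv (dx f (c1, v)) (dx f (x, y))). lra. }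
  assert (B2 : Rabs (dy f (x, c2)) < B).
  { assert (Rabs (dy f (x, c2) - dy f (x, y)) < 1).
    { apply K2; simpl. rewrite Rminus_diag, Rabs_R0; lra. generalize (between_abs _ _ _ Hc2); lra. }
    unfold B. generalize (Rabs_triang_inv (dy f (x, c2)) (dy f (x, y))). lra. }
  eapply Rle_lt_trans. apply Rabs_triang. rewrite !Rabs_mult.
  assert (E3 : A * (eps / (2 * A)) = eps / 2) by (field; lra).
  assert (E4 : B * (eps / (2 * B)) = eps / 2) by (field; lra).
  assert (P1 := Rabs_pos (dx f (c1, v))). assert (P2 := Rabs_pos (u - x)).
  assert (P3 := Rabs_pos (dy f (x, c2))). assert (P4 := Rabs_pos (v - y)).
  assert (Rabs (dx f (c1, v)) * Rabs (u - x) < A * (eps / (2 * A))) by nra.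
  assert (Rabs (dy f (x, c2)) * Rabs (v - y) < B * (eps / (2 * B))) by nra.
  lra.
Qed.

Section Step.
Variables (g : R * R -> R * R) (alpha beta L e lam : R).
Hypothesis HC : C1_map g.
Hypothesis HL : 0 < L.
Hypothesis He : e = 1 \/ e = -1.
Hypothesis Hlam : lam > 1.
Hypothesis HB1 : forall a b y, in_hull (Box alpha beta) (dx (comp1 g)) a ->
  in_hull (Box alpha beta) (dy (comp1 g)) b -> Rabs y <= L -> e * (a + b * y) >= lam.
Hypothesis HB2 : forall a b y, in_hull (Box alpha beta) (dx (comp2 g)) a ->
  in_hull (Box alpha beta) (dy (comp2 g)) b -> Rabs y <= L -> Rabs (a + b * y) <= L.

Lemma step p q : Box alpha beta p -> Box alpha beta q ->
  Rabs (snd q - snd p) <= L * Rabs (fst q - fst p) ->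
  exists mu, mu >= lam /\ e * (fst (g q) - fst (g p)) = mu * (fst q - fst p) /\
    Rabs (snd (g q) - snd (g p)) <= L * Rabs (fst q - fst p).
Proof.
  destruct p as [px py], q as [qx qy]. simpl. intros [Hp1 Hp2] [Hq1 Hq2] Hc. simpl in *.
  destruct (Req_dec qx px) as [Eh|Eh].
  - subst. rewrite Rminus_diag, Rabs_R0, Rmult_0_r in Hc |- *.
    assert (qy = py) by (generalize (Rabs_pos (qy - py)); unfold Rabs in Hc; destruct Rcase_abs; lra).
    subst. exists lam. rewrite !Rminus_diag, Rabs_R0. split; [lra|split; [ring|lra]].
  - set (h := qx - px). set (k := qy - py). set (y := k / h).
    assert (Hh : h <> 0) by (unfold h; lra).
    assert (Hy : Rabs y <= L).
    { unfold y, Rdiv. rewrite Rabs_mult, Rabs_inv.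
      apply Rmult_le_reg_r with (Rabs h). apply Rabs_pos_lt; auto.
      rewrite Rmult_assoc, Rinv_l by (apply Rabs_no_R0; auto). unfold h, k; lra. }
    destruct HC as [[Hx1 [Hy1 _]] [Hx2 [Hy2 _]]].
    destruct (mvt_x _ Hx1 px qx qy) as [a1 [Ha1 E1]].
    destruct (mvt_y _ Hy1 px py qy) as [b1 [Hb1 F1]].
    destruct (mvt_x _ Hx2 px qx qy) as [a2 [Ha2 E2]].
    destruct (mvt_y _ Hy2 px py qy) as [b2 [Hb2 F2]].
    assert (Ba1 : Box alpha beta (a1, qy)).
    { split; simpl; auto. generalize (between_abs2 _ _ _ Ha1). unfold Rmax; destruct Rle_dec; lra. }
    assert (Ba2 : Box alpha beta (a2, qy)).
    { split; simpl; auto. generalize (between_abs2 _ _ _ Ha2). unfold Rmax; destruct Rle_dec; lra. }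
    assert (Bb1 : Box alpha beta (px, b1)).
    { split; simpl; auto. generalize (between_abs2 _ _ _ Hb1). unfold Rmax; destruct Rle_dec; lra. }
    assert (Bb2 : Box alpha beta (px, b2)).
    { split; simpl; auto. generalize (between_abs2 _ _ _ Hb2). unfold Rmax; destruct Rle_dec; lra. }
    assert (D1 : fst (g (qx, qy)) - fst (g (px, py)) = h * (dx (comp1 g) (a1, qy) + dy (comp1 g) (px, b1) * y)).
    { unfold comp1 in E1, F1 |- *.
      replace (fst (g (qx, qy)) - fst (g (px, py))) with
        ((fst (g (qx, qy)) - fst (g (px, qy))) + (fst (g (px, qy)) - fst (g (px, py)))) by ring.
      rewrite E1, F1. fold h k. unfold y. field. auto. }
    assert (D2 : snd (g (qx, qy)) - snd (g (px, py)) = h * (dx (comp2 g) (a2, qy) + dy (comp2 g) (px, b2) * y)).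
    { unfold comp2 in E2, F2 |- *.
      replace (snd (g (qx, qy)) - snd (g (px, py))) with
        ((snd (g (qx, qy)) - snd (g (px, qy))) + (snd (g (px, qy)) - snd (g (px, py)))) by ring.
      rewrite E2, F2. fold h k. unfold y. field. auto. }
    exists (e * (dx (comp1 g) (a1, qy) + dy (comp1 g) (px, b1) * y)). split.
    + apply HB1; auto; apply hull_mem; auto.
    + split.
      * rewrite D1. fold h. ring.
      * rewrite D2. fold h. rewrite Rabs_mult. rewrite Rmult_comm.
        apply Rmult_le_compat_r. apply Rabs_pos. apply HB2; auto; apply hull_mem; auto.
Qed.
End Step.

Lemma cont_pt_of (f : R -> R) t :
  (forall eps, 0 < eps -> exists d, 0 < d /\ forall t', Rabs (t' - t) < d -> Rabs (f t' - f t) < eps) ->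
  continuity_pt f t.
Proof.
  intros H. unfold continuity_pt, continue_in, limit1_in, limit_in.
  intros eps Heps. destruct (H eps Heps) as [d [Hd K]]. exists d; split; auto.
  intros x [_ Hx]. simpl in *. unfold R_dist in *. apply K; auto.
Qed.

Definition cont1 (h : R -> R * R) t := forall eps, 0 < eps -> exists d, 0 < d /\
  forall t', Rabs (t' - t) < d -> Rabs (fst (h t') - fst (h t)) < eps /\ Rabs (snd (h t') - snd (h t)) < eps.

Lemma cont1_comp (g : R * R -> R * R) h t :
  (forall p, cont2 (comp1 g) p) -> (forall p, cont2 (comp2 g) p) -> cont1 h t ->
  cont1 (fun t => g (h t)) t.
Proof.
  intros H1 H2 Hh eps Heps.
  destruct (H1 (h t) eps Heps) as [d1 [Hd1 K1]].
  destruct (H2 (h t) eps Heps) as [d2 [Hd2 K2]].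
  destruct (Hh (Rmin d1 d2) (Rmin_glb_lt _ _ _ Hd1 Hd2)) as [d [Hd K]].
  exists d. split; auto. intros t' Ht. destruct (K t' Ht) as [Ka Kb].
  assert (Rmin d1 d2 <= d1) by apply Rmin_l. assert (Rmin d1 d2 <= d2) by apply Rmin_r.
  split.
  - apply (K1 (h t')); lra.
  - apply (K2 (h t')); lra.
Qed.

Section Iter.
Variables (g : R * R -> R * R) (alpha beta L e lam sigma : R).
Hypothesis HC : C1_map g.
Hypothesis Hg0 : g (0, 0) = (0, 0).
Hypothesis HL : 0 < L.
Hypothesis He : e = 1 \/ e = -1.
Hypothesis Hs : sigma = 1 \/ sigma = -1.
Hypothesis Hlam : lam > 1.
Hypothesis HB1 : forall a b y, in_hull (Box alpha beta) (dx (comp1 g)) a ->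
  in_hull (Box alpha beta) (dy (comp1 g)) b -> Rabs y <= L -> e * (a + b * y) >= lam.
Hypothesis HB2 : forall a b y, in_hull (Box alpha beta) (dx (comp2 g)) a ->
  in_hull (Box alpha beta) (dy (comp2 g)) b -> Rabs y <= L -> Rabs (a + b * y) <= L.

Definition G n t := Nat.iter n g (sigma * t, 0).

Lemma G_S n t : G (S n) t = g (G n t).
Proof. reflexivity. Qed.

Lemma G_0 n : G n 0 = (0, 0).
Proof.
  induction n. unfold G; simpl. rewrite Rmult_0_r; auto.
  rewrite G_S, IHn; auto.
Qed.

Lemma G_cont n t : cont1 (G n) t.
Proof.
  destruct HC as [C1 C2].
  induction n.
  - intros eps Heps. exists eps. split; auto. intros t' Ht. unfold G; simpl.
    rewrite Rminus_diag, Rabs_R0. split; auto.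
    replace (sigma * t' - sigma * t) with (sigma * (t' - t)) by ring.
    rewrite Rabs_eps_mul; auto.
  - apply (cont1_comp g (G n) t); auto; apply C1_cont; auto.
Qed.

Lemma G_fst_cont n : continuity (fun t => fst (G n t)).
Proof.
  intros t. apply cont_pt_of. intros eps Heps.
  destruct (G_cont n t eps Heps) as [d [Hd K]]. exists d; split; auto.
  intros t' Ht. apply K; auto.
Qed.

Lemma inv n u w : (forall k, (k < n)%nat -> Box alpha beta (G k u) /\ Box alpha beta (G k w)) ->
  exists mu, mu >= lam ^ n /\
    fst (G n w) - fst (G n u) = e ^ n * sigma * mu * (w - u) /\
    Rabs (snd (G n w) - snd (G n u)) <= L * Rabs (fst (G n w) - fst (G n u)).
Proof.
  induction n; intros Hk.
  - exists 1. unfold G; simpl. split; [lra|split; [ring|]].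
    rewrite Rminus_diag, Rabs_R0. apply Rmult_le_pos; [lra|apply Rabs_pos].
  - destruct IHn as [mu [Hmu [E1 C1]]]. { intros k Hk'. apply Hk. lia. }
    destruct (Hk n ltac:(lia)) as [Bu Bw].
    destruct (step g alpha beta L e lam HC HB1 HB2 (G n u) (G n w) Bu Bw C1)
      as [mu' [Hmu' [E2 C2]]].
    assert (Hee : e * e = 1) by (destruct He as [-> | ->]; ring).
    assert (Hpos : lam ^ n > 0) by (apply pow_lt; lra).
    rewrite !G_S.
    assert (E3 : fst (g (G n w)) - fst (g (G n u)) = e * mu' * (fst (G n w) - fst (G n u))).
    { rewrite Rmult_assoc, <- E2. rewrite <- Rmult_assoc, Hee. ring. }
    exists (mu * mu'). split.
    + simpl. rewrite Rmult_comm. apply Rle_ge. apply Rmult_le_compat; lra.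
    + split.
      * rewrite E3, E1. simpl. ring.
      * rewrite E3.
        assert (Hm : Rabs (e * mu' * (fst (G n w) - fst (G n u))) = mu' * Rabs (fst (G n w) - fst (G n u))).
        { rewrite Rmult_assoc, Rabs_eps_mul by auto. rewrite Rabs_mult, (Rabs_right mu') by lra. auto. }
        rewrite Hm. eapply Rle_trans. exact C2.
        apply Rmult_le_compat_l; [lra|].
        rewrite <- (Rmult_1_l (Rabs (fst (G n w) - fst (G n u)))) at 1.
        apply Rmult_le_compat_r; [apply Rabs_pos | lra].
Qed.

Lemma sign_pm n : e ^ n * sigma = 1 \/ e ^ n * sigma = -1.
Proof.
  induction n.
  - simpl. rewrite Rmult_1_l. auto.
  - simpl. destruct He as [-> | ->]; destruct IHn as [H|H];
    [left|right|right|left]; rewrite Rmult_assoc, H; ring.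
Qed.

Hypothesis Halpha : 0 < alpha.
Hypothesis HLb : L * alpha < beta.

Lemma box_of_cone q : Rabs (snd q) <= L * Rabs (fst q) -> Rabs (fst q) <= alpha -> Box alpha beta q.
Proof. intros H1 H2. split; auto. assert (L * Rabs (fst q) <= L * alpha) by (apply Rmult_le_compat_l; lra). lra. Qed.

Definition good n ts := forall u, 0 <= u <= ts -> forall k, (k <= n)%nat -> Box alpha beta (G k u).

Lemma finish n ts : 0 <= ts ->
  (forall u, 0 <= u <= ts -> forall k, (k < n)%nat -> Box alpha beta (G k u)) ->
  Rabs (fst (G n ts)) <= alpha -> forall u, 0 <= u <= ts -> Box alpha beta (G n u).
Proof.
  intros Hts Hb Ha u Hu.
  destruct (inv n 0 u) as [m1 [Hm1 [E1 C1]]].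
  { intros k Hk. split; apply Hb; auto; lra. }
  destruct (inv n u ts) as [m2 [Hm2 [E2 C2]]].
  { intros k Hk. split; apply Hb; auto; lra. }
  rewrite G_0 in E1, C1. simpl in E1, C1. rewrite Rminus_0_r in E1, C1, C1.
  assert (Hp : lam ^ n > 0) by (apply pow_lt; lra).
  apply box_of_cone; auto.
  assert (Ex : fst (G n ts) = e ^ n * sigma * (m1 * u + m2 * (ts - u))).
  { replace (fst (G n ts)) with ((fst (G n ts) - fst (G n u)) + fst (G n u)) by ring.
    rewrite E2, E1. ring. }
  rewrite E1. rewrite Ex in Ha.
  rewrite Rmult_assoc, Rabs_eps_mul by apply sign_pm.
  rewrite Rabs_eps_mul in Ha by apply sign_pm.
  assert (0 <= m1 * u) by nra. assert (0 <= m2 * (ts - u)) by nra.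
  rewrite Rabs_right in Ha by lra. rewrite Rabs_right by lra. lra.
Qed.

Lemma first_fail (P : nat -> Prop) M : P 0%nat -> ~ P M -> exists K, P K /\ ~ P (S K).
Proof.
  intros H0. induction M; intros HM. contradiction.
  destruct (classic (P M)) as [h|h]. exists M; auto. apply IHM; auto.
Qed.

Variable x0 : R.
Hypothesis Hx0 : 0 < x0.
Hypothesis Hx0a : x0 <= alpha.

Lemma ivt_good n t1 y : 0 <= t1 -> Rmin 0 (fst (G n t1)) <= y <= Rmax 0 (fst (G n t1)) ->
  exists ts, 0 <= ts <= t1 /\ fst (G n ts) = y.
Proof.
  intros Ht Hy.
  destruct (IVT_gen (fun t => fst (G n t)) 0 t1 y (G_fst_cont n)) as [ts [H1 H2]].
  { rewrite G_0. simpl. auto. }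
  exists ts. rewrite Rmin_left, Rmax_right in H1 by lra. auto.
Qed.

Lemma escape : exists N ts, 0 <= ts <= x0 /\ good N ts /\ fst (G N ts) = sigma * alpha.
Proof.
  set (ag := fun n => good n x0).
  assert (Hee : e * e = 1) by (destruct He as [-> | ->]; ring).
  assert (Hss : sigma * sigma = 1) by (destruct Hs as [-> | ->]; ring).
  assert (A0 : ag 0%nat).
  { intros u Hu k Hk. assert (k = 0%nat) by lia. subst k. unfold G; simpl.
    split; simpl. rewrite Rabs_eps_mul, Rabs_right; auto; lra. rewrite Rabs_R0.
    assert (0 <= L * alpha) by nra. lra. }
  destruct (Pow_x_infinity lam ltac:(rewrite Rabs_right; lra) (alpha / x0 + 1)) as [M HM].
  assert (AM : ~ ag M).
  { intros H. destruct (inv M 0 x0) as [m [Hm [E1 _]]].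
    { intros k Hk. split; apply H; lia || lra. }
    assert (HB := H x0 ltac:(lra) M (le_n _)). destruct HB as [HB _].
    rewrite G_0 in E1. simpl in E1. rewrite !Rminus_0_r in E1. rewrite E1 in HB.
    specialize (HM M (le_n _)). rewrite Rabs_right in HM by (apply Rle_ge, pow_le; lra).
    rewrite Rmult_assoc, Rabs_eps_mul, Rabs_mult in HB by (apply sign_pm).
    assert (Hp : lam ^ M > 0) by (apply pow_lt; lra).
    rewrite !Rabs_right in HB by lra.
    assert (alpha / x0 * x0 = alpha) by (field; lra).
    assert (m * x0 >= lam ^ M * x0) by nra. nra. }
  destruct (first_fail ag M A0 AM) as [K [HK HK1]].
  assert (Ht1 : exists t1, 0 <= t1 <= x0 /\ ~ Box alpha beta (G (S K) t1)).
  { apply NNPP. intros Hn. apply HK1. intros u Hu k Hk.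
    destruct (Nat.le_gt_cases k K) as [h|h]. apply HK; auto.
    assert (k = S K) by lia. subst k. apply NNPP. intros Hb. apply Hn. exists u; auto. }
  destruct Ht1 as [t1 [Ht1 Hnb]].
  destruct (inv (S K) 0 t1) as [m [Hm [E1 C1]]].
  { intros k Hk. split; apply HK; lia || lra. }
  rewrite G_0 in E1, C1. cbn [fst snd] in E1, C1. rewrite !Rminus_0_r in E1, C1.
  assert (Hp : lam ^ (S K) > 0) by (apply pow_lt; lra).
  assert (Hbig : m * t1 > alpha).
  { destruct (Rlt_or_le alpha (m * t1)); auto. exfalso. apply Hnb. apply box_of_cone; auto.
    rewrite E1, Rmult_assoc, Rabs_eps_mul, Rabs_mult by (apply sign_pm). rewrite !Rabs_right by nra. nra. }
  assert (GoodSK : forall ts, 0 <= ts <= t1 -> Rabs (fst (G (S K) ts)) = alpha -> good (S K) ts).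
  { intros ts Hts Hx u Hu k Hk. destruct (Nat.le_gt_cases k K) as [h|h]. apply HK; auto; lra.
    assert (k = S K) by lia. subst k. apply (finish (S K) ts); auto; try lra.
    intros u' Hu' k' Hk'. apply HK; lia || lra. }
  destruct (sign_pm (S K)) as [Hc|Hc].
  -
    destruct Hs as [Hs1|Hs1].
    +
      destruct (ivt_good (S K) t1 (sigma * alpha)) as [ts [Hts Hx]]; auto; try lra.
      { rewrite E1, Hc. rewrite Rmin_left, Rmax_right by nra. nra. }
      exists (S K), ts. split; [lra|]. split; auto. apply GoodSK; auto.
      rewrite Hx, Hs1, Rmult_1_l, Rabs_right; lra.
    +
      assert (Heq : e = -1).
      { destruct He as [h|h]; auto. rewrite h, pow1, Hs1 in Hc. lra. }
      destruct (ivt_good (S K) t1 (- sigma * alpha)) as [ts2 [Hts2 Hx2]]; auto; try lra.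
      { rewrite E1, Hc, Hs1. rewrite Rmin_left, Rmax_right by nra. nra. }
      assert (Hg2 : good (S K) ts2) by (apply GoodSK; auto; rewrite Hx2, Hs1; rewrite Rabs_right; lra).
      destruct (inv (S K) 0 ts2) as [m2 [Hm2 [E2 C2]]].
      { intros k Hk. split; apply HK; lia || lra. }
      rewrite G_0 in E2, C2. cbn [fst snd] in E2, C2. rewrite !Rminus_0_r in E2, C2.
      assert (B0 : Box alpha beta (0, 0)) by (split; simpl; rewrite Rabs_R0; nra).
      destruct (step g alpha beta L e lam HC HB1 HB2 (0, 0) (G (S K) ts2) B0 (Hg2 ts2 ltac:(lra) (S K) (le_n _)))
        as [mu' [Hmu' [E3 _]]].
      { simpl. rewrite !Rminus_0_r. auto. }
      rewrite Hg0 in E3. cbn [fst snd] in E3. rewrite !Rminus_0_r in E3. rewrite <- G_S, Hx2, Heq, Hs1 in E3.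
      destruct (ivt_good (S (S K)) ts2 (sigma * alpha)) as [ts [Hts Hx]]; try lra.
      { assert (fst (G (S (S K)) ts2) = - (mu' * alpha)) by lra.
        rewrite H, Hs1. rewrite Rmin_right, Rmax_left by nra. nra. }
      exists (S (S K)), ts. split; [lra|]. split; auto.
      intros u Hu k Hk. destruct (Nat.le_gt_cases k (S K)) as [h|h]. apply Hg2; auto; lra.
      assert (k = S (S K)) by lia. subst k. apply (finish (S (S K)) ts); auto; try lra.
      intros u' Hu' k' Hk'. apply Hg2; lia || lra.
      rewrite Hx, Hs1. rewrite Rabs_left; lra.
  - destruct Hs as [Hs1|Hs1].
    + assert (Heq : e = -1).
      { destruct He as [h|h]; auto. rewrite h, pow1, Hs1 in Hc. lra. }
      destruct (ivt_good (S K) t1 (- sigma * alpha)) as [ts2 [Hts2 Hx2]]; auto; try lra.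
      { rewrite E1, Hc, Hs1. rewrite Rmin_right, Rmax_left by nra. nra. }
      assert (Hg2 : good (S K) ts2) by (apply GoodSK; auto; rewrite Hx2, Hs1; rewrite Rabs_left; lra).
      assert (B0 : Box alpha beta (0, 0)) by (split; simpl; rewrite Rabs_R0; nra).
      destruct (inv (S K) 0 ts2) as [m2 [Hm2 [E2 C2]]].
      { intros k Hk. split; apply HK; lia || lra. }
      rewrite G_0 in E2, C2. cbn [fst snd] in E2, C2. rewrite !Rminus_0_r in E2, C2.
      destruct (step g alpha beta L e lam HC HB1 HB2 (0, 0) (G (S K) ts2) B0 (Hg2 ts2 ltac:(lra) (S K) (le_n _)))
        as [mu' [Hmu' [E3 _]]].
      { simpl. rewrite !Rminus_0_r. auto. }
      rewrite Hg0 in E3. cbn [fst snd] in E3. rewrite !Rminus_0_r in E3. rewrite <- G_S, Hx2, Heq, Hs1 in E3.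
      destruct (ivt_good (S (S K)) ts2 (sigma * alpha)) as [ts [Hts Hx]]; try lra.
      { assert (fst (G (S (S K)) ts2) = mu' * alpha) by lra.
        rewrite H, Hs1. rewrite Rmin_left, Rmax_right by nra. nra. }
      exists (S (S K)), ts. split; [lra|]. split; auto.
      intros u Hu k Hk. destruct (Nat.le_gt_cases k (S K)) as [h|h]. apply Hg2; auto; lra.
      assert (k = S (S K)) by lia. subst k. apply (finish (S (S K)) ts); auto; try lra.
      intros u' Hu' k' Hk'. apply Hg2; lia || lra.
      rewrite Hx, Hs1. rewrite Rabs_right; lra.
    + destruct (ivt_good (S K) t1 (sigma * alpha)) as [ts [Hts Hx]]; auto; try lra.
      { rewrite E1, Hc. rewrite Rmin_right, Rmax_left by nra. nra. }
      exists (S K), ts. split; [lra|]. split; auto. apply GoodSK; auto.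
      rewrite Hx, Hs1, Rabs_left; lra.
Qed.
End Iter.

Definition cl s := Rmax (-1) (Rmin 1 s).
Lemma cl_in s : -1 <= cl s <= 1.
Proof. unfold cl, Rmax, Rmin. repeat destruct Rle_dec; lra. Qed.
Lemma cl_lip s t : Rabs (cl s - cl t) <= Rabs (s - t).
Proof. unfold cl, Rmax, Rmin, Rabs. repeat destruct Rle_dec; repeat destruct Rcase_abs; lra. Qed.
Lemma cl_id s : -1 <= s <= 1 -> cl s = s.
Proof. unfold cl, Rmax, Rmin. intros. repeat destruct Rle_dec; lra. Qed.

Lemma vcont (v : R -> R * R) :
  (forall s, -1 <= s <= 1 ->
     filterlim v (within (fun t => -1 <= t <= 1) (locally s)) (locally (v s))) ->
  forall s0, -1 <= s0 <= 1 -> forall eps, 0 < eps -> exists d, 0 < d /\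
    forall s, -1 <= s <= 1 -> Rabs (s - s0) < d ->
      Rabs (fst (v s) - fst (v s0)) < eps /\ Rabs (snd (v s) - snd (v s0)) < eps.
Proof.
  intros Hv s0 Hs0 eps Heps.
  destruct (Hv s0 Hs0 (ball (v s0) (mkposreal eps Heps)) (locally_ball _ _)) as [d Hd].
  exists d. split; [apply cond_pos|]. intros s Hs Hd'.
  destruct (Hd s Hd' Hs) as [h1 h2]. split; [exact h1 | exact h2].
Qed.

Lemma vcl_cont (v : R -> R * R) :
  (forall s, -1 <= s <= 1 ->
     filterlim v (within (fun t => -1 <= t <= 1) (locally s)) (locally (v s))) ->
  forall t0 eps, 0 < eps -> exists d, 0 < d /\ forall t, Rabs (t - t0) < d ->
      Rabs (fst (v (cl t)) - fst (v (cl t0))) < eps /\ Rabs (snd (v (cl t)) - snd (v (cl t0))) < eps.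
Proof.
  intros Hv t0 eps Heps.
  destruct (vcont v Hv (cl t0) (cl_in t0) eps Heps) as [d [Hd K]].
  exists d. split; auto. intros t Ht. apply K. apply cl_in.
  eapply Rle_lt_trans. apply cl_lip. auto.
Qed.

Theorem mainTheorem17
  (g : R * R -> R * R) (L alpha beta : R) (v : R -> R * R) :
  C1_map g ->
  g (0, 0) = (0, 0) ->
  0 < L ->
  0 < alpha -> 0 < beta -> beta / alpha > L ->
  (forall s, -1 <= s <= 1 ->
     filterlim v (within (fun t => -1 <= t <= 1) (locally s)) (locally (v s))) ->
  (forall s, -1 <= s <= 1 -> Box alpha beta (v s)) ->
  snd (v (-1)) = - L * fst (v (-1)) ->
  snd (v 1) = L * fst (v 1) ->
  (forall s, -1 <= s <= 1 -> fst (v s) <> 0) ->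
  (forall a11 a12 a21 a22 y,
     in_IDg g (Box alpha beta) a11 a12 a21 a22 -> Rabs y <= L ->
     Rabs (a11 * 1 + a12 * y) > 1 /\ Rabs (a21 * 1 + a22 * y) <= L) ->
  forall delta, 0 < delta ->
  exists (p : R * R) (n : nat),
    Scone L delta p /\
    (forall k, (k <= n)%nat -> Box alpha beta (Nat.iter k g p)) /\
    exists s, -1 <= s <= 1 /\ Nat.iter n g p = v s.
Proof.
  intros HC Hg0 HL Ha Hb Hba Hv HvB Hvm Hvp Hv0 Hyp delta Hdelta.
  assert (B0 : Box alpha beta (0, 0)) by (split; simpl; rewrite Rabs_R0; lra).
  assert (HLb : L * alpha < beta).
  { apply Rmult_lt_compat_r with (r := alpha) in Hba; auto.
    replace (beta / alpha * alpha) with beta in Hba by (field; lra). lra. }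
  set (U := Box alpha beta).
  assert (Hyp1 : forall a b y, in_hull U (dx (comp1 g)) a -> in_hull U (dy (comp1 g)) b ->
    Rabs y <= L -> Rabs (a + b * y) > 1).
  { intros a b y Ha1 Hb1 Hy.
    destruct (Hyp a b (dx (comp2 g) (0,0)) (dy (comp2 g) (0,0)) y) as [H _]; auto.
    repeat split; try apply Ha1; try apply Hb1; apply hull_mem; auto.
    rewrite Rmult_1_r in H. auto. }
  assert (HB2 : forall a b y, in_hull U (dx (comp2 g)) a -> in_hull U (dy (comp2 g)) b ->
    Rabs y <= L -> Rabs (a + b * y) <= L).
  { intros a b y Ha1 Hb1 Hy.
    destruct (Hyp (dx (comp1 g) (0,0)) (dy (comp1 g) (0,0)) a b y) as [_ H]; auto.
    repeat split; try apply Ha1; try apply Hb1; apply hull_mem; auto.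
    rewrite Rmult_1_r in H. auto. }
  destruct (lam_main U (dx (comp1 g)) (dy (comp1 g)) L (0, 0) B0 HL Hyp1) as [e [lam [He [Hlam HB1]]]].
  set (sigma := if Rlt_dec 0 (fst (v (-1))) then 1 else -1).
  assert (Hs : sigma = 1 \/ sigma = -1) by (unfold sigma; destruct Rlt_dec; auto).
  assert (Hss : sigma * sigma = 1) by (destruct Hs as [-> | ->]; ring).
  assert (Hsv1 : sigma * fst (v (-1)) > 0).
  { assert (fst (v (-1)) <> 0) by (apply Hv0; lra).
    unfold sigma; destruct Rlt_dec; [lra|]. nra. }
  assert (Hfc : continuity (fun t => fst (v (cl t)))).
  { intros t0. apply cont_pt_of. intros eps Heps.
    destruct (vcl_cont v Hv t0 eps Heps) as [d [Hd K]]. exists d; split; auto.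
    intros t Ht. apply K; auto. }
  assert (Hsv : forall s, -1 <= s <= 1 -> sigma * fst (v s) > 0).
  { intros s Hs1. destruct (Rlt_or_le 0 (sigma * fst (v s))) as [h|h]; auto. exfalso.
    assert (fst (v s) <> 0) by (apply Hv0; auto).
    destruct (IVT_gen (fun t => fst (v (cl t))) (-1) s 0 Hfc) as [z [Hz1 Hz2]].
    { rewrite !cl_id by (auto; lra).
      destruct Hs as [Hs'|Hs']; rewrite Hs' in *;
      unfold Rmin, Rmax; destruct Rle_dec; lra. }
    apply (Hv0 (cl z)); auto. apply cl_in. }
  set (x0 := Rmin delta alpha).
  assert (Hx0 : 0 < x0) by (apply Rmin_glb_lt; auto).
  assert (Hx0a : x0 <= alpha) by apply Rmin_r.
  assert (Hx0d : x0 <= delta) by apply Rmin_l.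
  destruct (escape g alpha beta L e lam sigma HC Hg0 HL He Hs Hlam HB1 HB2 Ha HLb x0 Hx0 Hx0a)
    as [N [ts [Hts [Hgood HXts]]]].
  set (X := fun u => fst (G g sigma N u)).
  set (Y := fun u => snd (G g sigma N u)).
  assert (Hcone : forall u w, 0 <= u <= ts -> 0 <= w <= ts -> Rabs (Y w - Y u) <= L * Rabs (X w - X u)).
  { intros u w Hu Hw.
    destruct (inv g alpha beta L e lam sigma HC HL He Hlam HB1 HB2 N u w) as [m [_ [_ H]]]; auto.
    intros k Hk. split; apply Hgood; auto; lia. }
  assert (HX0 : X 0 = 0) by (unfold X; rewrite G_0; auto).
  assert (HY0 : Y 0 = 0) by (unfold Y; rewrite G_0; auto).
  assert (Hts0 : 0 < ts).
  { destruct (Req_dec ts 0) as [h|h]; [|lra]. exfalso.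
    assert (X ts = sigma * alpha) by exact HXts. rewrite h, HX0 in H. destruct Hs as [Hs'|Hs']; rewrite Hs' in H; lra. }
  set (r := fun x => sigma * Rmax 0 (Rmin alpha (sigma * x))).
  assert (Hr_lip : forall x x', Rabs (r x - r x') <= Rabs (x - x')).
  { intros x x'. unfold r. rewrite <- Rmult_minus_distr_l, Rabs_eps_mul by auto.
    replace (x - x') with (sigma * (sigma * x - sigma * x')) by (rewrite Rmult_minus_distr_l, <- !Rmult_assoc, Hss; ring).
    rewrite (Rabs_eps_mul sigma (_ - _)) by auto.
    unfold Rmax, Rmin, Rabs. repeat destruct Rle_dec; repeat destruct Rcase_abs; lra. }
  assert (Hr_id : forall x, 0 <= sigma * x -> sigma * x <= alpha -> r x = x).
  { intros x h1 h2. unfold r. rewrite Rmin_right by auto. rewrite Rmax_right by auto.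
    rewrite <- Rmult_assoc, Hss. ring. }
  assert (Hr_rng : forall x, Rmin (X 0) (X ts) <= r x <= Rmax (X 0) (X ts)).
  { intros x. rewrite HX0. assert (X ts = sigma * alpha) by exact HXts. rewrite H. unfold r.
    assert (0 <= Rmax 0 (Rmin alpha (sigma * x)) <= alpha).
    { unfold Rmax, Rmin. repeat destruct Rle_dec; lra. }
    set (m := Rmax 0 (Rmin alpha (sigma * x))) in *. clearbody m.
    destruct Hs as [Hs'|Hs']; rewrite Hs'; unfold Rmin, Rmax; repeat destruct Rle_dec; lra. }
  assert (HXc : continuity X) by (apply G_fst_cont; auto).
  assert (T : forall x, { u | 0 <= u <= ts /\ X u = r x }).
  { intros x. destruct (IVT_gen X 0 ts (r x) HXc (Hr_rng x)) as [u [H1 H2]].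
    exists u. rewrite Rmin_left, Rmax_right in H1 by lra. auto. }
  set (c := fun x => Y (proj1_sig (T x))).
  assert (Hc_lip : forall x x', Rabs (c x - c x') <= L * Rabs (x - x')).
  { intros x x'. unfold c. destruct (T x) as [u [Hu Eu]]. destruct (T x') as [u' [Hu' Eu']]. simpl.
    eapply Rle_trans. apply Hcone; auto. rewrite Eu, Eu'.
    apply Rmult_le_compat_l; [lra|]. apply Hr_lip. }
  assert (Hc_bd : forall x, Rabs (c x) <= L * Rabs (r x)).
  { intros x. unfold c. destruct (T x) as [u [Hu Eu]]. simpl.
    assert (H := Hcone 0 u ltac:(lra) Hu). rewrite HX0, HY0, !Rminus_0_r in H. rewrite <- Eu. auto. }
  set (F := fun t => snd (v (cl t)) - c (fst (v (cl t)))).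
  assert (HFc : continuity F).
  { intros t0. apply cont_pt_of. intros eps Heps.
    destruct (vcl_cont v Hv t0 (eps / (L + 1))) as [d [Hd K]].
    { apply Rdiv_lt_0_compat; lra. }
    exists d; split; auto. intros t Ht. destruct (K t Ht) as [K1 K2]. unfold F.
    assert (H := Hc_lip (fst (v (cl t))) (fst (v (cl t0)))).
    replace (snd (v (cl t)) - c (fst (v (cl t))) - (snd (v (cl t0)) - c (fst (v (cl t0)))))
      with ((snd (v (cl t)) - snd (v (cl t0))) - (c (fst (v (cl t))) - c (fst (v (cl t0))))) by ring.
    eapply Rle_lt_trans. apply Rabs_triang. rewrite Rabs_Ropp.
    assert (L * Rabs (fst (v (cl t)) - fst (v (cl t0))) <= L * (eps / (L + 1))).
    { apply Rmult_le_compat_l; lra. }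
    assert (eps / (L + 1) + L * (eps / (L + 1)) = eps) by (field; lra).
    lra. }
  assert (Hm1 : -1 <= -1 <= 1) by lra. assert (Hp1 : -1 <= 1 <= 1) by lra.
  assert (Hrv : forall s, -1 <= s <= 1 -> r (fst (v s)) = fst (v s)).
  { intros s Hs1. apply Hr_id. specialize (Hsv s Hs1). lra.
    destruct (HvB s Hs1) as [h _]. rewrite <- (Rabs_eps_mul sigma) in h by auto.
    unfold Rabs in h. destruct Rcase_abs; lra. }
  destruct (IVT_gen F (-1) 1 0 HFc) as [s [Hs1 HFs]].
  { unfold F. rewrite !cl_id by lra.
    assert (A1 := Hc_bd (fst (v (-1)))). assert (A2 := Hc_bd (fst (v 1))).
    rewrite Hrv in A1, A2 by lra.
    assert (S1 := Hsv (-1) Hm1). assert (S2 := Hsv 1 Hp1).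
    rewrite Hvm, Hvp.
    destruct Hs as [Hs'|Hs']; rewrite Hs' in S1, S2;
    unfold Rabs in A1, A2; repeat destruct Rcase_abs;
    unfold Rmin, Rmax; destruct Rle_dec; nra. }
  rewrite Rmin_left, Rmax_right in Hs1 by lra.
  unfold F in HFs. rewrite cl_id in HFs by lra.
  set (xs := fst (v s)) in *.
  unfold c in HFs. destruct (T xs) as [u [Hu Eu]]. simpl in HFs.
  assert (Eu2 : X u = xs) by (rewrite Eu; apply (Hrv s); lra). clear Eu.
  exists (sigma * u, 0), N. split; [|split].
  - split; simpl. rewrite Rabs_R0. apply Rmult_le_pos; [lra|apply Rabs_pos].
    rewrite Rabs_eps_mul, Rabs_right by (auto; lra). lra.
  - intros k Hk. apply (Hgood u); auto.
  - exists s. split; auto. change (G g sigma N u = v s).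
    rewrite (surjective_pairing (G g sigma N u)), (surjective_pairing (v s)).
    fold (X u) (Y u). rewrite Eu2. f_equal. lra.
Qed.
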